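(* The target counital subalgebra of $H_\mathcal{C}$ is $$H_t(H_\mathcal{C})=\mathrm{span}\Big\{\sum_{k,b}\frac{\sqrt{d_k}}{\sqrt{d_a}}\,e^{ab}_{k;ab}\ :\ a\in Irr(\mathcal{C})\Big\}$$ (sum over $k,b$ with $(a,k,b)$ admissible). Moreover $\dim_\mathbb{C}H_t(H_\mathcal{C})=\dim_\mathbb{C}V_\mathbf{1}$, and $H_t(H_\mathcal{C})\cong V_\mathbf{1}$ as $H_\mathcal{C}$-modules; in particular $H_t(H_\mathcal{C})$ is simple.
   Context: $\mathcal{C}$ is a unitary fusion category, multiplicity free, whose simple objects are self-dual with trivial Frobenius–Schur indicators; $Irr(\mathcal{C})$ its simple objects, $d_a$ quantum dimensions, $(a,b,c)$ admissible iff $\mathrm{Hom}(a\otimes b,c)\ne0$; unitary $F$-symbols $F^{abc}_{d;nm}$ with trivalent vertices normalized so that $\theta(a,b,c)=\sqrt{d_ad_bd_c}$. $H_\mathcal{C}$ has basis $e^{ab}_{i;cd}$ ($(a,i,b)$, $(i,d,c)$ admissible), multiplication $e^{ab}_{i;cd}e^{a'b'}_{i';c'd'}=\frac{\delta_{c,a'}\delta_{d,b'}\delta_{i,i'}}{\sqrt{d_i}}e^{ab}_{i;c'd'}$, unit $\eta=\sum_{a,b,i}\sqrt{d_i}e^{ab}_{i;ab}$, counit $\varepsilon(e^{ab}_{i;cd})=\delta_{a,b}\delta_{c,d}\delta_{i,\mathbf{1}}$, comultiplication $\Delta(e^{ab}_{i;cd})=\sum_{j,k,p,q}\frac{\sqrt{d_jd_k}}{\sqrt{d_i}}F^{ajk}_{b;ip}F^{dkj}_{c;iq}e^{ap}_{j;cq}\otimes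 e^{pb}_{k;qd}$, antipode $S(e^{ab}_{i;cd})=\frac{\sqrt{d_bd_c}}{\sqrt{d_ad_d}}e^{dc}_{i;ba}$. The target counital map is $\varepsilon_t(h)=\varepsilon(\eta_{(1)}h)\eta_{(2)}$ and $H_t(H_\mathcal{C})=\varepsilon_t(H_\mathcal{C})$, an $H_\mathcal{C}$-module via $h\cdot z=\varepsilon_t(hz)$. For $i\in Irr(\mathcal{C})$, $V_i$ is the $H_\mathcal{C}$-module with basis $v^{ab}_i$ ($(a,i,b)$ admissible) and action $e^{ab}_{j;cd}\cdot v^{pq}_i=\frac{\delta_{i,j}\delta_{c,p}\delta_{d,q}}{\sqrt{d_i}}v^{ab}_i$. *)

(* Defs.v *)
From HB Require Import structures.
From mathcomp Require Import all_boot all_order all_algebra.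
From mathcomp Require Import reals complex.
Set Implicit Arguments.
Unset Strict Implicit.
Unset Printing Implicit Defensive.
Import Order.TTheory GRing.Theory Num.Theory.
Local Open Scope ring_scope.

(* Skeletal data of a multiplicity-free fusion category over C = R[i]:       *)
(*   lab        = Irr(C) (finite),  unitob = the unit object 1,                 *)
(*   adm a b c  <=> Hom(a (x) b, c) <> 0,                                    *)
(*   Fsym a b c d n m = F^{abc}_{d;nm}, where n labels the channel of b(x)c  *)
(*   (tree a(x)(b(x)c) -> a(x)n -> d) and m the channel of a(x)b             *)
(*   (tree (a(x)b)(x)c -> m(x)c -> d); this is the convention forced by the   *)
(*   comultiplication formula of H_C.                                        *)
Record fusion_data (R : realType) := FusionData {
  lab : finType;
  unitob : lab;
  adm : lab -> lab -> lab -> bool;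
  qdim : lab -> R;
  Fsym : lab -> lab -> lab -> lab -> lab -> lab -> R[i] }.

Arguments unitob {R} f.
Arguments adm {R} f.
Arguments qdim {R} f.
Arguments Fsym {R} f.

(* The axioms satisfied by the data of a unitary, multiplicity-free fusion
   category whose simple objects are self-dual with trivial Frobenius-Schur
   indicators, in the gauge where theta(a,b,c) = sqrt(d_a d_b d_c). *)
Definition is_UFC (R : realType) (U : fusion_data R) : Prop :=
  let F := Fsym U in let N := adm U in let d := qdim U in let o := unitob U in
  [/\
   [/\ (* self-duality: admissibility is fully symmetric; unit object *)
   (forall a b c, N a b c = N b a c) /\ (forall a b c, N a b c = N a c b),
   (forall a b, N o a b = (a == b)) &
   [/\ (forall a, 0 < d a), d o = 1 &
       forall a b, d a * d b = \sum_(c : lab U) (N a b c)%:R * d c]],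
   (forall a b c e n m, F a b c e n m != 0 ->
       [&& N b c n, N a n e, N a b m & N m c e]),
   (* unitarity of each F-matrix (rows n, columns m) *)
   (forall a b c e n n', N b c n -> N a n e -> N b c n' -> N a n' e ->
       \sum_(m : lab U | N a b m && N m c e) F a b c e n m * (F a b c e n' m)^*
         = (n == n')%:R) /\
   (forall a b c e m m', N a b m -> N m c e -> N a b m' -> N m' c e ->
       \sum_(n : lab U | N b c n && N a n e) (F a b c e n m)^* * F a b c e n m'
         = (m == m')%:R),
   [/\ (forall b c e, N b c e -> F o b c e e b = 1),
       (forall a c e, N a c e -> F a o c e c a = 1) &
       (forall a b e, N a b e -> F a b o e b e = 1)] /\
   (* pentagon equation *)
   (forall a b c d' e f g k l,
       N a b f -> N f c g -> N g d' e -> N c d' l -> N b l k -> N a k e ->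
       F f c d' e l g * F a b l e k f
         = \sum_(h : lab U) F a b c g h f * F a h d' e k g * F b c d' k l h)
  & (* trivial Frobenius-Schur indicators / normalization: F^{aaa}_{a;11} = 1/d_a *)
   (forall a, F a a a a o o = Complex (d a)^-1 0)].

Section HC.
Variables (R : realType) (U : fusion_data R).
Local Notation C := (R[i]).
Local Notation L := (lab U).

Definition sd (a : L) : C := Complex (Num.sqrt (qdim U a)) 0.

Definition tup5 := (L * L * L * L * L)%type.
Definition ta (t : tup5) : L := t.1.1.1.1.
Definition tb (t : tup5) : L := t.1.1.1.2.
Definition ti (t : tup5) : L := t.1.1.2.
Definition tc (t : tup5) : L := t.1.2.
Definition td (t : tup5) : L := t.2.

(* e^{ab}_{i;cd} exists iff (a,i,b) and (i,d,c) are admissible *)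
Definition admH (t : tup5) : bool :=
  adm U (ta t) (ti t) (tb t) && adm U (ti t) (td t) (tc t).
Definition Hidx := {t : tup5 | admH t}.

Definition HC := {ffun Hidx -> C^o}.

(* basis vector e^{ab}_{i;cd} (the zero vector if the tuple is not admissible) *)
Definition eH (t : tup5) : HC := [ffun x : Hidx => ((val x == t)%:R : C^o)].

Definition mulH (h g : HC) : HC :=
  \sum_(x : Hidx) \sum_(y : Hidx)
    (h x * g y) *:
      (if [&& tc (val x) == ta (val y), td (val x) == tb (val y)
             & ti (val x) == ti (val y)]
       then (sd (ti (val x)))^-1 *:
              eH ((((ta (val x), tb (val x)), ti (val x)), tc (val y)), td (val y))
       else 0).

Definition etaH : HC :=
  \sum_(x : Hidx | (ta (val x) == tc (val x)) && (tb (val x) == td (val x)))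
     sd (ti (val x)) *: eH (val x).

Definition epsH (h : HC) : C :=
  \sum_(x : Hidx) h x *
    ((ta (val x) == tb (val x)) && (tc (val x) == td (val x))
     && (ti (val x) == unitob U))%:R.

(* coefficient of e_y (x) e_z in Delta(e_x) *)
Definition dcoef (x y z : Hidx) : C :=
  let x := val x in let y := val y in let z := val z in
  if [&& ta y == ta x, tc y == tc x, tb z == tb x, td z == td x,
         ta z == tb y & tc z == td y]
  then sd (ti y) * sd (ti z) / sd (ti x)
       * Fsym U (ta x) (ti y) (ti z) (tb x) (ti x) (tb y)
       * Fsym U (td x) (ti z) (ti y) (tc x) (ti x) (td y)
  else 0.

(* comultiplication; H (x) H is identified with functions on Hidx * Hidx *)
Definition DeltaH (h : HC) : {ffun Hidx * Hidx -> C} :=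
  [ffun yz => \sum_(x : Hidx) h x * dcoef x yz.1 yz.2].

(* target counital map eps_t(h) = eps(eta_(1) h) eta_(2) *)
Definition epst (h : HC) : HC :=
  \sum_(yz : Hidx * Hidx)
     (DeltaH etaH yz * epsH (mulH (eH (val yz.1)) h)) *: eH (val yz.2).

Definition Vidx (i : L) := {p : L * L | adm U p.1 i p.2}.
Definition VM (i : L) := {ffun Vidx i -> C^o}.
Definition eV (i : L) (p : L * L) : VM i :=
  [ffun y : Vidx i => ((val y == p)%:R : C^o)].
Definition actV (i : L) (h : HC) (v : VM i) : VM i :=
  \sum_(x : Hidx) \sum_(y : Vidx i)
    (h x * v y) *:
      (if [&& ti (val x) == i, tc (val x) == (val y).1 & td (val x) == (val y).2]
       then (sd i)^-1 *: eV i (ta (val x), tb (val x))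
       else 0).

Definition tvec (a : L) : HC :=
  \sum_(x : Hidx | [&& ta (val x) == a, tc (val x) == a & tb (val x) == td (val x)])
     (sd (ti (val x)) / sd a) *: eH (val x).

Definition HtSpan : {vspace HC} := <<[seq tvec a | a <- enum L]>>%VS.

Definition Ht_iso_V1 : Prop :=
  exists f : VM (unitob U) -> HC,
    [/\ forall (c : C) u v, f (c *: u + v) = c *: f u + f v,
        injective f,
        (forall h, h \in HtSpan <-> exists v, h = f v)
      & forall h v, f (actV h v) = epst (mulH h (f v))].

Definition Ht_simple : Prop :=
  HtSpan != 0%VS /\
  forall W : {vspace HC}, (W <= HtSpan)%VS ->
    (forall h w, w \in W -> epst (mulH h w) \in W) ->
    W = 0%VS \/ W = HtSpan.

End HC.

(* Main.v *)
Require Import Defs.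
From HB Require Import structures.
From mathcomp Require Import all_boot all_order all_algebra.
From mathcomp Require Import reals complex.
From mathcomp Require Import ring.
Import Order.TTheory GRing.Theory Num.Theory.
Local Open Scope ring_scope.
Set Implicit Arguments.
Unset Strict Implicit.

Section Pf.
Variables (R : realType) (U : fusion_data R).
Hypothesis HU : is_UFC U.
Local Notation C := (R[i]).
Local Notation L := (lab U).
Local Notation o := (unitob U).
Local Notation N := (adm U).
Local Notation F := (Fsym U).
Local Notation Hidx := (Hidx U).

Lemma N12 a b c : N a b c = N b a c.
Proof. by case: HU => [[[? _] _ _] _ _ _ _]. Qed.
Lemma N23 a b c : N a b c = N a c b.
Proof. by case: HU => [[[_ ?] _ _] _ _ _ _]. Qed.
Lemma N1 a b : N o a b = (a == b).
Proof. by case: HU => [[_ ? _] _ _ _ _]. Qed.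
Lemma dpos a : 0 < qdim U a.
Proof. by case: HU => [[_ _ [? _ _]] _ _ _ _]. Qed.
Lemma d1 : qdim U o = 1.
Proof. by case: HU => [[_ _ [_ ? _]] _ _ _ _]. Qed.
Lemma Fvan a b c e n m : F a b c e n m != 0 ->
       [&& N b c n, N a n e, N a b m & N m c e].
Proof. by case: HU => [_ H _ _ _]; apply: H. Qed.
Lemma Ftri2 a c e : N a c e -> F a o c e c a = 1.
Proof. by case: HU => [_ _ _ [[_ H _] _] _]; apply: H. Qed.
Lemma Ftri3 a b e : N a b e -> F a b o e b e = 1.
Proof. by case: HU => [_ _ _ [[_ _ H] _] _]; apply: H. Qed.

Lemma sd1 : sd o = 1.
Proof. by rewrite /Defs.sd d1 sqrtr1. Qed.
Lemma sd_neq0 (a : L) : sd a != 0.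
Proof.
rewrite /Defs.sd; apply/eqP => [[]] /eqP; rewrite sqrtr_eq0 leNgt dpos //.
Qed.

Lemma sum_delta1 (T : finType) (P : pred T) (G : T -> C) x :
  \sum_(y | P y) G y * (x == y)%:R = if P x then G x else 0.
Proof.
case: ifP => Px.
  rewrite (bigD1 x) //= eqxx mulr1 big1 ?addr0 // => y /andP[_ /negPf].
  by rewrite eq_sym => ->; rewrite mulr0.
by apply: big1 => y Py; case: eqP => [xy|]; [rewrite xy Py in Px | rewrite mulr0].
Qed.


Lemma scE (x y : C^o) : x *: y = x * y. Proof. by []. Qed.

Lemma eHE (t : tup5 U) (x : Hidx) : eH t x = (val x == t)%:R.
Proof. by rewrite ffunE. Qed.

Lemma tvecE (a : L) x : tvec a x =
  if [&& ta (val x) == a, tc (val x) == a & tb (val x) == td (val x)]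
  then sd (ti (val x)) / sd a else 0.
Proof.
rewrite /tvec sum_ffunE.
under eq_bigr do rewrite ffunE eHE val_eqE.
by rewrite sum_delta1.
Qed.

Lemma etaE x : etaH U x =
  if (ta (val x) == tc (val x)) && (tb (val x) == td (val x))
  then sd (ti (val x)) else 0.
Proof.
rewrite /etaH sum_ffunE.
under eq_bigr do rewrite ffunE eHE val_eqE.
by rewrite sum_delta1.
Qed.

Definition Phi (c : L -> C) : HC U := \sum_(a : L) (c a * sd a) *: tvec a.

Lemma PhiE c x : Phi c x =
  if (ta (val x) == tc (val x)) && (tb (val x) == td (val x))
  then c (ta (val x)) * sd (ti (val x)) else 0.
Proof.
rewrite /Phi sum_ffunE.
under eq_bigr do rewrite ffunE tvecE scE.
rewrite (bigD1 (ta (val x))) //= big1 ?addr0; last first.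
  by move=> a /negPf Ha; rewrite eq_sym in Ha; rewrite Ha /= mulr0.
rewrite eqxx /= [tc _ == _]eq_sym.
case: ifP => [_|]; last by rewrite mulr0.
by field; exact: sd_neq0.
Qed.


Lemma sum_deltaH (P : pred (tup5 U)) (G : tup5 U -> C) t :
  \sum_(x : Hidx | P (val x)) (val x == t)%:R * G (val x)
  = if admH t && P t then G t else 0.
Proof.
case: (boolP (admH t)) => Ht /=.
  pose x0 : Hidx := exist _ t Ht.
  case: ifP => Pt.
    rewrite (bigD1 x0) //= eqxx mul1r big1 ?addr0 // => x /andP[_ Hx].
    have /negPf -> : val x != t.
      by apply: contra Hx => /eqP e; apply/eqP/val_inj.
    by rewrite mul0r.
  by apply: big1 => x Px; case: eqP => [e|]; [rewrite -e Px in Pt | rewrite mul0r].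
by apply: big1 => x _; case: eqP => [e|]; [move: Ht; rewrite -e (valP x) | rewrite mul0r].
Qed.

Lemma sum_deltaH' (G : tup5 U -> C) t :
  \sum_(x : Hidx) (val x == t)%:R * G (val x)
  = if admH t then G t else 0.
Proof. by rewrite (sum_deltaH predT) andbT. Qed.

Lemma yadm (a : L) : admH ((((a,a),o),a),a).
Proof. by rewrite /admH /ta /tb /ti /tc /td /= N12 !N1 eqxx. Qed.
Definition yH (a : L) : Hidx := exist _ ((((a,a),o),a),a) (yadm a).

Lemma vadm (a : L) : N (a,a).1 o (a,a).2.
Proof. by rewrite /= N12 N1. Qed.
Definition vV (a : L) : Vidx o := exist (fun p : L * L => N p.1 o p.2) (a,a) (vadm a).

Lemma mulHE (h g : HC U) z : mulH h g z =
  \sum_(x : Hidx) \sum_(y : Hidx) h x * g y *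
    (if [&& tc (val x) == ta (val y), td (val x) == tb (val y)
             & ti (val x) == ti (val y)]
     then (sd (ti (val x)))^-1 *
       (val z == ((((ta (val x), tb (val x)), ti (val x)), tc (val y)), td (val y)))%:R
     else 0).
Proof.
rewrite /mulH sum_ffunE; apply: eq_bigr => x _; rewrite sum_ffunE.
apply: eq_bigr => y _; rewrite ffunE scE; case: ifP => _.
  by rewrite ffunE scE eHE.
by rewrite ffunE.
Qed.


Lemma mulH_eHE (y : Hidx) (g : HC U) z : mulH (eH (val y)) g z =
  \sum_(x : Hidx) g x *
    (if [&& tc (val y) == ta (val x), td (val y) == tb (val x)
             & ti (val y) == ti (val x)]
     then (sd (ti (val y)))^-1 *
       (val z == ((((ta (val y), tb (val y)), ti (val y)), tc (val x)), td (val x)))%:R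
     else 0).
Proof.
rewrite mulHE (bigD1 y) //= [X in _ + X]big1 ?addr0.
  by apply: eq_bigr => x _; rewrite eHE eqxx mul1r.
move=> x /negPf Hx; apply: big1 => x' _.
by rewrite eHE val_eqE Hx !mul0r.
Qed.

Definition E (g : HC U) (a : L) : C :=
  \sum_(x : Hidx | [&& ta (val x) == a, tb (val x) == a & ti (val x) == o]) g x.

Lemma sum_if_delta (b : bool) (k : C) t (G : tup5 U -> C) :
  \sum_(z : Hidx) (if b then k * (val z == t)%:R else 0) * G (val z)
  = if b then k * (if admH t then G t else 0) else 0.
Proof.
case: b; last by apply: big1 => z _; rewrite mul0r.
by under eq_bigr do rewrite -mulrA; rewrite -mulr_sumr sum_deltaH'.
Qed.

Lemma eps_mul_eH (y : Hidx) (g : HC U) : epsH (mulH (eH (val y)) g) =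
  if (ti (val y) == o) && (ta (val y) == tb (val y)) then
  \sum_(x : Hidx | [&& ta (val x) == tc (val y), tb (val x) == td (val y)
                     & ti (val x) == o]) g x else 0.
Proof.
rewrite /epsH.
under eq_bigr do rewrite mulH_eHE mulr_suml.
rewrite exchange_big /=.
under eq_bigr => x _.
  under eq_bigr do rewrite -mulrA.
  rewrite -mulr_sumr (sum_if_delta _ _ _ (fun t => ((ta t == tb t) && (tc t == td t) && (ti t == o))%:R)).
  over.
case: y => [[[[[a b] i] c] d] /= Hy].
rewrite /admH /ta /tb /ti /tc /td /= in Hy *.
case: ifP => Hab.
  rewrite [RHS]big_mkcond /=; apply: eq_bigr => x _.
  case: x => [[[[[a' b'] i'] c'] d'] /= Hx].
  rewrite /admH /ta /tb /ti /tc /td /= in Hx *.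
  move: Hab => /andP[/eqP ei /eqP eab]; have /andP[_ Hx2] := Hx; have /andP[Hy2 _] := Hy; subst.
  rewrite (eq_sym a') (eq_sym b').
  rewrite [i' == o]eq_sym; case: ifP => Hc; last by rewrite mulr0.
  move: Hc => /and3P[/eqP e1 /eqP e2 /eqP e3]; subst.
  rewrite Hy2 Hx2 /= !eqxx /= sd1 invr1 mul1r.
  by rewrite N1 eq_sym in Hx2; rewrite Hx2 mulr1.
rewrite big1 // => x _.
case: ifP => Hc; last by rewrite mulr0.
case: ifP => _; last by rewrite !mulr0.
by move: Hab; case: (a == b); case: (i == o) => //= _; rewrite ?andbF /= !mulr0.
Qed.


Lemma sum2_collapse (T1 T2 : finType) (G : T1 -> T2 -> C) y0 w0 :
  (forall y w, G y w != 0 -> (y == y0) && (w == w0)) ->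
  \sum_y \sum_w G y w = G y0 w0.
Proof.
move=> HG; rewrite (bigD1 y0) //= [X in _ + X]big1 ?addr0.
  rewrite (bigD1 w0) //= big1 ?addr0 // => w /negPf Hw.
  by apply/eqP; apply: contraT => /HG; rewrite Hw andbF.
move=> y /negPf Hy; apply: big1 => w _.
by apply/eqP; apply: contraT => /HG; rewrite Hy.
Qed.

Lemma sum_deltaV (G : Hidx -> C) (x : Hidx) :
  \sum_(z : Hidx) G z * (val x == val z)%:R = G x.
Proof. by under eq_bigr do rewrite val_eqE; rewrite sum_delta1. Qed.

Lemma epstE g : epst g = Phi (E g).
Proof.
apply/ffunP => x; rewrite PhiE /epst sum_ffunE.
under eq_bigr do rewrite ffunE scE eHE.
rewrite (_ : \sum_(yz : Hidx * Hidx) _ = \sum_(y : Hidx) \sum_(z : Hidx)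
   DeltaH (etaH U) (y,z) * epsH (mulH (eH (val y)) g) * (val x == val z)%:R);
  last by rewrite pair_big; apply: eq_bigr => -[y z] _.
under eq_bigr do rewrite sum_deltaV ffunE /= mulr_suml eps_mul_eH.
rewrite (sum2_collapse (y0 := yH (ta (val x))) (w0 := x)).
  rewrite etaE /dcoef /=.
  case: x => [[[[[a b] k] c] d] /= Hx].
  rewrite /admH /ta /tb /ti /tc /td /= in Hx *.
  rewrite /E /ta /tb /ti /= !eqxx /= [c == a]eq_sym.
  case: (a =P c) => [<-|_]; last by rewrite !mul0r.
  case: (b =P d) => [<-|_]; last by rewrite !mul0r.
  move: Hx => /andP[Hakb _].
  have Hbka : N b k a by rewrite N12 N23 N12.
  rewrite Ftri2 // Ftri3 // sd1 /=.
  by field; exact: sd_neq0.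
move=> y w.
case: x => [[[[[a b] k] c] d] Hx]; case: y => [[[[[a1 b1] i1] c1] d1] Hy].
case: w => [[[[[a2 b2] i2] c2] d2] Hw].
rewrite -!val_eqE etaE /dcoef /= /ta /tb /ti /tc /td /=.
case: ifP => [/andP[/eqP e1 /eqP e2]|_]; last by rewrite !mul0r eqxx.
case: ifP => [/andP[/eqP e3 /and5P[/eqP e4 /eqP e5 /eqP e6 /eqP e7 /eqP e8]]|_]; last by rewrite mulr0 mul0r eqxx.
case: ifP => [/andP[/eqP e9 /eqP e10]|_]; last by rewrite mulr0 eqxx.
subst => Hnz.
have HF : F b1 o k d2 i2 b1 != 0.
  by apply: contraNneq Hnz => ->; rewrite !(mulr0, mul0r).
move/Fvan: HF => /andP[]; rewrite N1 => /eqP <- _.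
move: Hy; rewrite /admH /ta /tb /ti /tc /td /= N1 => /andP[_ /eqP ->].
by rewrite !eqxx.
Qed.


Lemma Phi_ext c c' : c =1 c' -> Phi c = Phi c'.
Proof. by move=> H; apply: eq_bigr => a _; rewrite H. Qed.

Lemma PhiyH c a : Phi c (yH a) = c a.
Proof. by rewrite PhiE /ta /tb /tc /td /ti /= !eqxx sd1 mulr1. Qed.

Lemma PhiDZ k c c' : Phi (fun a => k * c a + c' a) = k *: Phi c + Phi c'.
Proof.
apply/ffunP => x; rewrite !ffunE !PhiE scE.
by case: ifP => _; rewrite ?mulr0 ?addr0 // mulrDl mulrA.
Qed.

Lemma Phi0 : Phi (fun _ => 0) = 0.
Proof. by apply/ffunP => x; rewrite !ffunE PhiE mul0r; case: ifP. Qed.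

Lemma tvec_Phi a : tvec a = Phi (fun b => (b == a)%:R / sd a).
Proof.
apply/ffunP => x; rewrite PhiE tvecE.
case: x => [[[[[a1 b1] i1] c1] d1] Hx]; rewrite /ta /tb /ti /tc /td /=.
case: (a1 =P a) => [->|/eqP/negPf Ha] /=.
  rewrite [a == c1]eq_sym; case: ifP => // _.
  by rewrite ?eqxx ?mul1r mulrC.
by rewrite !mul0r; case: ifP.
Qed.

Lemma Phi_sum c : Phi c = \sum_(a : L) c a *: Phi (fun b => (b == a)%:R).
Proof.
apply/ffunP => x; rewrite PhiE sum_ffunE.
under eq_bigr do rewrite ffunE scE PhiE.
case: ifP => _; last by rewrite big1 // => a _; rewrite mulr0.
under eq_bigr do rewrite mulrA.
by rewrite -mulr_suml sum_delta1 /=.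
Qed.

Lemma tvec_in a : tvec a \in HtSpan U.
Proof. by apply: memv_span; apply: map_f; rewrite mem_enum. Qed.

Lemma Phi_in c : Phi c \in HtSpan U.
Proof. by apply: memv_suml => a _; apply: memvZ; apply: tvec_in. Qed.

Lemma HtSpanP h : h \in HtSpan U <-> exists c, h = Phi c.
Proof.
split; last by move=> [c ->]; apply: Phi_in.
rewrite /HtSpan span_def big_map big_enum /= => /memv_sumP[vs Hvs ->].
apply: (big_ind (fun h => exists c, h = Phi c)).
- by exists (fun _ => 0); rewrite Phi0.
- move=> _ _ [c1 ->] [c2 ->]; exists (fun a => 1 * c1 a + c2 a).
  by rewrite PhiDZ scale1r.
move=> a Ha; have /vlineP[k ->] := Hvs a Ha.
exists (fun b => k * ((b == a)%:R / sd a) + 0).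
by rewrite PhiDZ Phi0 addr0 tvec_Phi.
Qed.


Lemma sum1_collapse (T : finType) (G : T -> C) y0 :
  (forall y, G y != 0 -> y == y0) -> \sum_y G y = G y0.
Proof.
move=> HG; rewrite (bigD1 y0) //= big1 ?addr0 // => y /negPf Hy.
by apply/eqP; apply: contraT => /HG; rewrite Hy.
Qed.

Lemma E_Phi c a : E (Phi c) a = c a.
Proof.
rewrite /E big_mkcond /= (sum1_collapse (y0 := yH a)).
  by rewrite /ta /tb /ti /= !eqxx PhiyH.
move=> y; case: y => [[[[[a1 b1] i1] c1] d1] Hy].
rewrite PhiE -val_eqE /ta /tb /ti /tc /td /=.
case: ifP => [/and3P[/eqP -> /eqP -> /eqP ->]|]; last by rewrite eqxx.
case: ifP => [/andP[/eqP <- /eqP <-]|]; last by rewrite eqxx.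
by rewrite !eqxx.
Qed.

Lemma part1 h : h \in HtSpan U <-> exists g, h = epst g.
Proof.
split.
  by move=> /HtSpanP[c ->]; exists (Phi c); rewrite epstE; apply: Phi_ext => a; rewrite E_Phi.
by move=> [g ->]; rewrite epstE; apply: Phi_in.
Qed.

Lemma vV_val (y : Vidx o) : y = vV (val y).1.
Proof.
case: y => [[p1 p2] /= Hp]; apply: val_inj => /=.
by move: Hp; rewrite /= N12 N1 => /eqP ->.
Qed.

Lemma card_V1 : #|{: Vidx o}| = #|L|.
Proof.
apply/esym/(bij_eq_card (f := vV)).
exists (fun y => (val y).1) => [a //|y /=].
by rewrite -vV_val.
Qed.


Definition Act (h : HC U) (c : L -> C) (a : L) : C :=
  \sum_(x : Hidx | [&& ta (val x) == a, tb (val x) == a & ti (val x) == o])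
     h x * c (tc (val x)).

Lemma ifE (T : finType) (b : bool) (f : {ffun T -> C^o}) y :
  (if b then f else 0) y = if b then f y else 0.
Proof. by case: b; rewrite ?ffunE. Qed.

Lemma actV_vV h (v : VM o) a : actV h v (vV a) = Act h (fun b => v (vV b)) a.
Proof.
rewrite /actV sum_ffunE /Act [RHS]big_mkcond /=; apply: eq_bigr => x _.
rewrite sum_ffunE.
under eq_bigr do rewrite ffunE scE ifE ffunE scE ffunE.
case: x => [[[[[a1 b1] i1] c1] d1] Hx].
rewrite /ta /tb /ti /tc /td /=.
case: (i1 =P o) => [ei|ne]; last first.
  rewrite !andbF /=; apply: big1 => y _; by rewrite mulr0.
subst i1.
have Hdc : d1 = c1 by move: Hx; rewrite /admH /= N1 => /andP[_ /eqP].
subst d1.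
rewrite (sum1_collapse (y0 := vV c1)).
  rewrite /= !eqxx /= sd1 invr1 mul1r andbT xpair_eqE.
  by rewrite (eq_sym a a1) (eq_sym a b1); case: ifP; rewrite ?mulr1 ?mulr0.
move=> y; case: ifP => [/and3P[_ /eqP e1 /eqP e2]|]; last by rewrite mulr0 eqxx.
by move=> _; rewrite [y]vV_val -e1.
Qed.

Lemma sum_if_deltaP (P : pred (tup5 U)) (b : bool) (k : C) t :
  \sum_(z : Hidx | P (val z)) (if b then k * (val z == t)%:R else 0)
  = if b then k * (admH t && P t)%:R else 0.
Proof.
case: b; last by rewrite big1.
rewrite -mulr_sumr; under eq_bigr do rewrite -[(_ == _)%:R]mulr1.
by rewrite (sum_deltaH P (fun _ => 1)); case: ifP.
Qed.

Lemma E_mul_Phi h c a : E (mulH h (Phi c)) a = Act h c a.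
Proof.
rewrite /E; under eq_bigr do rewrite mulHE.
rewrite exchange_big /=; under eq_bigr do rewrite exchange_big /=.
rewrite /Act [RHS]big_mkcond /=; apply: eq_bigr => x _.
under eq_bigr do rewrite -mulr_sumr (sum_if_deltaP (fun t => [&& ta t == a, tb t == a & ti t == o])).
case: x => [[[[[a1 b1] i1] c1] d1] Hx].
rewrite /ta /tb /ti /tc /td /=.
case: ifP => HP; last first.
  apply: big1 => y _; case: ifP => _; last by rewrite mulr0.
  by rewrite andbF !mulr0.
move: HP => /and3P[/eqP ea /eqP eb /eqP ei]; subst.
have Hdc : d1 = c1 by move: Hx; rewrite /admH /= N1 => /andP[_ /eqP].
subst d1.
rewrite (sum1_collapse (y0 := yH c1)).
  rewrite PhiyH /= !eqxx /= sd1 invr1 mul1r.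
  by rewrite /admH /= N12 !N1 !eqxx /= mulr1.
move=> y; case: y => [[[[[a2 b2] i2] c2] d2] Hy].
rewrite PhiE -val_eqE /ta /tb /ti /tc /td /=.
case: ifP => [/andP[/eqP e1 /eqP e2]|]; last by rewrite mulr0 mul0r eqxx.
case: ifP => [/and3P[/eqP e3 /eqP e4 /eqP e5]|]; last by rewrite mulr0 eqxx.
by subst => _; rewrite !eqxx.
Qed.


Lemma free_tvec : free [seq tvec a | a <- enum L].
Proof.
suff : free (in_tuple [seq tvec a | a <- enum L]) by []. apply/freeP => k Hk i.
have Hn (j : 'I_(size [seq tvec a | a <- enum L])) : (j < size (enum L))%N.
  by rewrite -(size_map (@tvec R U)) ltn_ord.
have := congr1 (fun h : HC U => h (yH (nth o (enum L) i))) Hk.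
rewrite sum_ffunE ffunE.
under eq_bigr => j _ do rewrite ffunE scE (nth_map o) ?Hn // tvecE.
rewrite (sum1_collapse (y0 := i)).
  rewrite /ta /tb /tc /ti /td /= !eqxx /= sd1 => /eqP.
  rewrite mulf_eq0 => /orP[/eqP //|].
  by rewrite mul1r invr_eq0 (negPf (sd_neq0 _)).
move=> j; rewrite /ta /tb /tc /ti /td /=.
case: ifP => [/andP[He _]|_]; last by rewrite mulr0 eqxx.
move=> _; apply/eqP/ord_inj/eqP; rewrite -(nth_uniq o (Hn j) (Hn i) (enum_uniq L)).
by rewrite eq_sym.
Qed.

Lemma dim_Ht : \dim (HtSpan U) = #|L|.
Proof. by move/eqP: free_tvec; rewrite size_map -cardE. Qed.

Definition fV (v : VM o) : HC U := Phi (fun a => v (vV a)).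

Lemma iso : Ht_iso_V1 U.
Proof.
exists fV; split.
- move=> k u v; rewrite /fV -PhiDZ; apply: Phi_ext => a.
  by rewrite !ffunE scE.
- move=> u v H; apply/ffunP => y; rewrite [y]vV_val.
  by have := congr1 (fun h : HC U => h (yH (val y).1)) H; rewrite !PhiyH.
- move=> h; split.
    move=> /HtSpanP[c ->]; exists [ffun y : Vidx o => (c (val y).1 : C^o)].
    by rewrite /fV; apply: Phi_ext => a; rewrite ffunE.
  by move=> [v ->]; apply: Phi_in.
- move=> h v; rewrite epstE /fV; apply: Phi_ext => a.
  by rewrite actV_vV E_mul_Phi.
Qed.

Lemma simple : Ht_simple U.
Proof.
split.
  apply/eqP => H0; have := Phi_in (fun _ => 1); rewrite H0 memv0.
  move=> /eqP /(congr1 (fun h : HC U => h (yH o))); rewrite PhiyH ffunE.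
  by move=> /eqP; rewrite oner_eq0.
move=> W sWH Hcl; case: (eqVneq W 0%VS) => [->|nzW]; [by left | right].
pose w := vpick W; have wW : w \in W := memv_pick W.
have nzw : w != 0 by rewrite vpick0.
have [c Hc] := (HtSpanP w).1 (subvP sWH _ wW).
case: (pickP (fun b => c b != 0)) => [b Hb|H0]; last first.
  move: nzw; rewrite Hc (Phi_ext (c' := fun _ => 0)) ?Phi0 ?eqxx //.
  by move=> a; move: (H0 a) => /= /negbFE /eqP.
have Hd a : Phi (fun a' => (a' == a)%:R) \in W.
  have := Hcl (eH ((((a,a),o),b),b)) w wW; rewrite Hc epstE.
  have -> : Phi (E (mulH (eH ((((a,a),o),b),b)) (Phi c)))
            = c b *: Phi (fun a' => (a' == a)%:R).
    rewrite -[_ *: _]addr0 -Phi0 -PhiDZ; apply: Phi_ext => a'.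
    rewrite E_mul_Phi /Act addr0.
    under eq_bigr do rewrite eHE.
    have H := sum_deltaH (fun t => [&& ta t == a', tb t == a' & ti t == o])
                        (fun t => c (tc t)) ((((a,a),o),b),b).
    simpl in H; rewrite H {H}.
    rewrite /admH /ta /tb /tc /ti /td /= N12 !N1 !eqxx /= andbT.
    by case: (a =P a') => [->|/eqP]; rewrite ?eqxx ?mulr1 // eq_sym => /negPf ->; rewrite mulr0.
  by move=> /(memvZ (c b)^-1); rewrite scalerA mulVf // scale1r.
apply/eqP; rewrite eqEsubv sWH /=; apply/subvP => h /HtSpanP[c' ->].
rewrite Phi_sum; apply: memv_suml => a _; apply: memvZ; exact: Hd.
Qed.

End Pf.

Unset Implicit Arguments.
Set Strict Implicit.

Theorem mainTheorem8 (R : realType) (U : fusion_data R) :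
  is_UFC U ->
  [/\ (* H_t(H_C) = eps_t(H_C) is the span of the vectors tvec a, a in Irr(C) *)
      (forall h : HC U, h \in HtSpan U <-> exists g : HC U, h = epst g),
      (* dim H_t(H_C) = dim V_1 *)
      \dim (HtSpan U) = \dim (fullv : {vspace VM (unitob U)}),
      (* H_t(H_C) ~= V_1 as H_C-modules *)
      Ht_iso_V1 U
    & (* H_t(H_C) is simple *)
      Ht_simple U].
Proof.
move=> HU; split.
- exact: part1 HU.
- rewrite (dim_Ht HU) dimvf /dim /= (card_V1 HU).
  by rewrite muln1.
- exact: iso HU.
- exact: simple HU.
Qed.
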